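(* Let $A$ be a Banach algebra and $n\ge 2$ such that $JMul_{n,l}(A,A^{*})$ is algebraically reflexive, and let $X$ be a right Banach $A$-module with $\{x\in X: x^{\perp}=A\}=\{0\}$. Then every approximately local left $n$-Jordan multiplier from $A$ into $X$ is a left $n$-Jordan multiplier.
   Context: $A^*$ is the dual of $A$, a right Banach $A$-module via $(f\cdot a)(b)=f(ab)$. A bounded linear $J:A\to Y$ is a left $n$-Jordan multiplier if $J(a^n)=J(a^{n-1})\cdot a$ for all $a\in A$; $JMul_{n,l}(A,Y)$ is the set of these. $T:A\to X$ bounded linear is an approximately local left $n$-Jordan multiplier if for each $a\in A$ there is a sequence $(J_{a,m})_m$ in $JMul_{n,l}(A,X)$ with $T(a)=\lim_m J_{a,m}(a)$. For $S\subseteq B(A,Y)$, $\mathrm{ref}(S)=\{T\in B(A,Y): T(x)\in\overline{\{s(x):s\in S\}}\ \forall x\in A\}$; $S$ is algebraically reflexive if $\mathrm{ref}(S)\subseteq S$. For $x\in X$, $x^\perp=\{a\in A: x\cdot a=0\}$. *)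

(* Defs.v *)
From Stdlib Require Import Reals.
Open Scope R_scope.

Record Cx := mkCx { Re : R; Im : R }.
Definition C0 : Cx := mkCx 0 0.
Definition C1 : Cx := mkCx 1 0.
Definition Cadd (z w : Cx) : Cx := mkCx (Re z + Re w) (Im z + Im w).
Definition Copp (z : Cx) : Cx := mkCx (- Re z) (- Im z).
Definition Cmul (z w : Cx) : Cx :=
  mkCx (Re z * Re w - Im z * Im w) (Re z * Im w + Im z * Re w).
Definition Cabs (z : Cx) : R := sqrt (Re z * Re z + Im z * Im z).

Record BanachSpace := {
  bs_car :> Type;
  bs_zero : bs_car;
  bs_add : bs_car -> bs_car -> bs_car;
  bs_opp : bs_car -> bs_car;
  bs_scal : Cx -> bs_car -> bs_car;
  bs_norm : bs_car -> R;
  bs_addA : forall x y z, bs_add x (bs_add y z) = bs_add (bs_add x y) z;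
  bs_addC : forall x y, bs_add x y = bs_add y x;
  bs_add0 : forall x, bs_add x bs_zero = x;
  bs_addN : forall x, bs_add x (bs_opp x) = bs_zero;
  bs_scalDr : forall c x y, bs_scal c (bs_add x y) = bs_add (bs_scal c x) (bs_scal c y);
  bs_scalDl : forall c d x, bs_scal (Cadd c d) x = bs_add (bs_scal c x) (bs_scal d x);
  bs_scalA : forall c d x, bs_scal (Cmul c d) x = bs_scal c (bs_scal d x);
  bs_scal1 : forall x, bs_scal C1 x = x;
  bs_norm_eq0 : forall x, bs_norm x = 0 -> x = bs_zero;
  bs_normZ : forall c x, bs_norm (bs_scal c x) = Cabs c * bs_norm x;
  bs_normD : forall x y, bs_norm (bs_add x y) <= bs_norm x + bs_norm y;
  bs_complete : forall u : nat -> bs_car,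
    (forall eps, 0 < eps -> exists N, forall m k, (N <= m)%nat -> (N <= k)%nat ->
       bs_norm (bs_add (u m) (bs_opp (u k))) < eps) ->
    exists l, forall eps, 0 < eps -> exists N, forall m, (N <= m)%nat ->
       bs_norm (bs_add (u m) (bs_opp l)) < eps
}.
Arguments bs_zero {_}. Arguments bs_add {_}. Arguments bs_opp {_}.
Arguments bs_scal {_}. Arguments bs_norm {_}.

Definition bs_sub {E : BanachSpace} (x y : E) : E := bs_add x (bs_opp y).

Record BanachAlgebra := {
  ba_sp :> BanachSpace;
  ba_mul : ba_sp -> ba_sp -> ba_sp;
  ba_mulA : forall a b c, ba_mul a (ba_mul b c) = ba_mul (ba_mul a b) c;
  ba_mulDl : forall a b c, ba_mul (bs_add a b) c = bs_add (ba_mul a c) (ba_mul b c);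
  ba_mulDr : forall a b c, ba_mul a (bs_add b c) = bs_add (ba_mul a b) (ba_mul a c);
  ba_scal_mull : forall t a b, ba_mul (bs_scal t a) b = bs_scal t (ba_mul a b);
  ba_scal_mulr : forall t a b, ba_mul a (bs_scal t b) = bs_scal t (ba_mul a b);
  ba_normM : forall a b, bs_norm (ba_mul a b) <= bs_norm a * bs_norm b
}.
Arguments ba_mul {_}.

Record RightBanachModule (A : BanachAlgebra) := {
  rm_sp :> BanachSpace;
  rm_act : rm_sp -> A -> rm_sp;
  rm_actDl : forall x y a, rm_act (bs_add x y) a = bs_add (rm_act x a) (rm_act y a);
  rm_actDr : forall x a b, rm_act x (bs_add a b) = bs_add (rm_act x a) (rm_act x b);
  rm_act_scall : forall t x a, rm_act (bs_scal t x) a = bs_scal t (rm_act x a);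
  rm_act_scalr : forall t x a, rm_act x (bs_scal t a) = bs_scal t (rm_act x a);
  rm_actA : forall x a b, rm_act (rm_act x a) b = rm_act x (ba_mul a b);
  rm_normM : forall x a, bs_norm (rm_act x a) <= bs_norm x * bs_norm a
}.
Arguments rm_act {_ _}.

(** a^(k+1) : powers with positive exponent (A need not be unital) *)
Fixpoint powS {A : BanachAlgebra} (a : A) (k : nat) : A :=
  match k with O => a | S k' => ba_mul (powS a k') a end.
(* apow a n = a^n for n >= 1 *)
Definition apow {A : BanachAlgebra} (a : A) (n : nat) : A := powS a (n - 1).

Definition bounded_linear {E F : BanachSpace} (T : E -> F) : Prop :=
  (forall x y, T (bs_add x y) = bs_add (T x) (T y)) /\
  (forall c x, T (bs_scal c x) = bs_scal c (T x)) /\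
  (exists M, forall x, bs_norm (T x) <= M * bs_norm x).

Definition JMul_l {A : BanachAlgebra} (X : RightBanachModule A) (n : nat)
  (J : A -> X) : Prop :=
  bounded_linear J /\
  forall a : A, J (apow a n) = rm_act (J (apow a (n - 1))) a.

Definition approx_local_JMul_l {A : BanachAlgebra} (X : RightBanachModule A)
  (n : nat) (T : A -> X) : Prop :=
  bounded_linear T /\
  forall a : A, exists J : nat -> A -> X,
    (forall m, JMul_l X n (J m)) /\
    (forall eps, 0 < eps -> exists N, forall m, (N <= m)%nat ->
       bs_norm (bs_sub (J m a) (T a)) < eps).

(** An element of A^* is a bounded linear functional f : A -> Cx; the module
    action is (f . a)(b) = f(ab); the norm is the operator norm, so
    ||f|| <= r iff |f b| <= r ||b|| for all b.  A map J : A -> A^* is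
    represented as J : A -> A -> Cx (J a = the functional J(a)); equality in
    A^* is pointwise equality of functionals. *)
Definition dual_elt {A : BanachAlgebra} (f : A -> Cx) : Prop :=
  (forall x y, f (bs_add x y) = Cadd (f x) (f y)) /\
  (forall c x, f (bs_scal c x) = Cmul c (f x)) /\
  (exists M, forall x, Cabs (f x) <= M * bs_norm x).

Definition dual_dist_le {A : BanachAlgebra} (f g : A -> Cx) (r : R) : Prop :=
  forall b : A, Cabs (Cadd (f b) (Copp (g b))) <= r * bs_norm b.

Definition bounded_linear_dual {A : BanachAlgebra} (J : A -> A -> Cx) : Prop :=
  (forall a, dual_elt (J a)) /\
  (forall a a' b, J (bs_add a a') b = Cadd (J a b) (J a' b)) /\
  (forall c a b, J (bs_scal c a) b = Cmul c (J a b)) /\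
  (exists M, forall a, dual_dist_le (J a) (fun _ => C0) (M * bs_norm a)).

Definition JMul_l_dual (A : BanachAlgebra) (n : nat) (J : A -> A -> Cx) : Prop :=
  bounded_linear_dual J /\
  forall a b : A, J (apow a n) b = J (apow a (n - 1)) (ba_mul a b).

(* ref(JMul_{n,l}(A, A^* )) : T(x) lies in the norm closure of {s(x) : s in S} *)
Definition ref_JMul_l_dual (A : BanachAlgebra) (n : nat) (T : A -> A -> Cx) : Prop :=
  bounded_linear_dual T /\
  forall x : A, forall eps, 0 < eps ->
    exists s, JMul_l_dual A n s /\ dual_dist_le (T x) (s x) eps.

Definition JMul_l_dual_alg_reflexive (A : BanachAlgebra) (n : nat) : Prop :=
  forall T, ref_JMul_l_dual A n T -> JMul_l_dual A n T.

(* Main.v *)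
Require Import Defs.
From Stdlib Require Import Reals Lra Classical ClassicalEpsilon.
From mathcomp Require boolp classical_sets.
Open Scope R_scope.

Lemma zorn_pre (T : Type) (t0 : T) (P : T -> T -> Prop) :
  (forall t, P t t) -> (forall r s t, P r s -> P s t -> P r t) ->
  (forall A : T -> Prop, (forall s t, A s -> A t -> P s t \/ P t s) ->
      exists t, forall s, A s -> P s t) ->
  exists t, forall s, P t s -> P s t.
Proof.
  intros Hr Ht Hc.
  set (Rb := fun s t => boolp.asbool (P s t)).
  assert (HR : forall s t, Rb s t = true <-> P s t).
  { intros s t; unfold Rb. split; intro H.
    - destruct (boolp.asboolP (P s t)); [assumption| discriminate].
    - destruct (boolp.asboolP (P s t)); [reflexivity| contradiction]. }
  destruct (@classical_sets.ZL_preorder T t0 Rb) as [t Ht'].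
  - intro t; apply HR; auto.
  - intros r s t H1 H2; apply HR; apply HR in H1; apply HR in H2; eauto.
  - intros A HA. destruct (Hc A) as [t Hte].
    + intros s t Hs Ht2. destruct (HA s t Hs Ht2) as [H|H]; apply HR in H; auto.
    + exists t; intros s Hs; apply HR; auto.
  - exists t; intros s Hs. apply HR. apply Ht'. apply HR; auto.
Qed.

Lemma Cx_eq (z w : Cx) : Re z = Re w -> Im z = Im w -> z = w.
Proof. destruct z, w; simpl; intros; subst; reflexivity. Qed.

Section Basics.
Variable E : BanachSpace.

Definition rs (t : R) (x : E) : E := bs_scal (mkCx t 0) x.

Lemma add0l (x : E) : bs_add bs_zero x = x.
Proof. rewrite bs_addC; apply bs_add0. Qed.

Lemma add_cancel (x y z : E) : bs_add x y = bs_add x z -> y = z.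
Proof.
  intro H.
  assert (bs_add (bs_opp x) (bs_add x y) = bs_add (bs_opp x) (bs_add x z)) by (rewrite H; auto).
  rewrite !bs_addA in H0. rewrite (bs_addC _ (bs_opp x) x), bs_addN, !add0l in H0. exact H0.
Qed.

Lemma opp_uniq (x y : E) : bs_add x y = bs_zero -> y = bs_opp x.
Proof. intro H; apply (add_cancel x); rewrite H, bs_addN; auto. Qed.

Lemma rs_add (s t : R) (x : E) : rs (s + t) x = bs_add (rs s x) (rs t x).
Proof.
  unfold rs; rewrite <- bs_scalDl; f_equal; apply Cx_eq; simpl; ring.
Qed.

Lemma rs_mul (s t : R) (x : E) : rs s (rs t x) = rs (s * t) x.
Proof.
  unfold rs; rewrite <- bs_scalA; f_equal; apply Cx_eq; simpl; ring.
Qed.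

Lemma rs1 (x : E) : rs 1 x = x.
Proof. unfold rs; apply bs_scal1. Qed.

Lemma rs0 (x : E) : rs 0 x = bs_zero.
Proof.
  apply (add_cancel (rs 0 x)). rewrite <- rs_add, bs_add0. f_equal; ring.
Qed.

Lemma rs_addr (t : R) (x y : E) : rs t (bs_add x y) = bs_add (rs t x) (rs t y).
Proof. unfold rs; apply bs_scalDr. Qed.

Lemma opp_rs (x : E) : bs_opp x = rs (-1) x.
Proof.
  symmetry; apply opp_uniq. rewrite <- (rs1 x) at 1. rewrite <- rs_add.
  replace (1 + -1) with 0 by ring. apply rs0.
Qed.

Lemma Cabs_real (t : R) : Cabs (mkCx t 0) = Rabs t.
Proof.
  unfold Cabs; simpl. replace (t * t + 0 * 0) with (Rsqr t) by (unfold Rsqr; ring).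
  apply sqrt_Rsqr_abs.
Qed.

Lemma norm_rs (t : R) (x : E) : bs_norm (rs t x) = Rabs t * bs_norm x.
Proof. unfold rs; rewrite bs_normZ, Cabs_real; auto. Qed.

Lemma norm0 : bs_norm (@bs_zero E) = 0.
Proof. rewrite <- (rs0 bs_zero), norm_rs, Rabs_R0; ring. Qed.

Lemma norm_opp (x : E) : bs_norm (bs_opp x) = bs_norm x.
Proof. rewrite opp_rs, norm_rs. rewrite (Rabs_left (-1)) by lra. ring. Qed.

Lemma norm_ge0 (x : E) : 0 <= bs_norm x.
Proof.
  pose proof (bs_normD _ x (bs_opp x)). rewrite bs_addN, norm0, norm_opp in H. lra.
Qed.

Lemma opp_add (x y : E) : bs_opp (bs_add x y) = bs_add (bs_opp x) (bs_opp y).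
Proof. rewrite !opp_rs; apply rs_addr. Qed.

Lemma oppK (x : E) : bs_opp (bs_opp x) = x.
Proof. rewrite !opp_rs, rs_mul. replace (-1 * -1) with 1 by ring. apply rs1. Qed.

Lemma norm_sub_sym (x y : E) : bs_norm (bs_sub x y) = bs_norm (bs_sub y x).
Proof.
  unfold bs_sub. rewrite <- norm_opp, opp_add, oppK, bs_addC. auto.
Qed.

End Basics.

Definition is_glb (P : R -> Prop) (l : R) :=
  (forall v, P v -> l <= v) /\ (forall m, (forall v, P v -> m <= v) -> m <= l).

Definition inf (P : R -> Prop) : R := epsilon (inhabits 0) (fun l => is_glb P l).

Lemma inf_spec (P : R -> Prop) : (exists v, P v) -> (exists m, forall v, P v -> m <= v) ->
  is_glb P (inf P).
Proof.
  intros [v Hv] [m Hm]. unfold inf. apply epsilon_spec.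
  destruct (completeness (fun w => P (- w))) as [L [HL1 HL2]].
  - exists (- m). intros w Hw. apply Hm in Hw. lra.
  - exists (- v). rewrite Ropp_involutive; auto.
  - exists (- L). split.
    + intros u Hu. assert (- u <= L). { apply HL1. rewrite Ropp_involutive; auto. } lra.
    + intros m' Hm'. assert (L <= - m'). { apply HL2. intros w Hw. apply Hm' in Hw. lra. } lra.
Qed.

Lemma le_eps (a b : R) : (forall eps, 0 < eps -> a <= b + eps) -> a <= b.
Proof.
  intro H. destruct (Rle_dec a b); auto.
  specialize (H ((a - b)/2)). lra.
Qed.

Lemma glb_approx (P : R -> Prop) l : is_glb P l -> forall eps, 0 < eps ->
  exists v, P v /\ v < l + eps.
Proof.
  intros [H1 H2] eps He. apply NNPP; intro Hn.
  assert (l + eps <= l). { apply H2. intros v Hv. apply Rnot_lt_le. intro Hl. apply Hn; eauto. }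
  lra.
Qed.

Section Sub.
Variable E : BanachSpace.

Definition subl (q : E -> R) :=
  (forall x y, q (bs_add x y) <= q x + q y) /\
  (forall t x, 0 <= t -> q (rs E t x) = t * q x).

Lemma subl_zero q : subl q -> q bs_zero = 0.
Proof. intros [_ H]. rewrite <- (rs0 E bs_zero), H by lra. ring. Qed.

Lemma subl_lb q x : subl q -> - q (bs_opp x) <= q x.
Proof.
  intros Hq. pose proof (proj1 Hq x (bs_opp x)). rewrite bs_addN, subl_zero in H; auto. lra.
Qed.

Definition stepS (q : E -> R) (z x : E) : R -> Prop :=
  fun v => exists t, 0 <= t /\ v = q (bs_add x (rs E t z)) - t * q z.

Definition step (q : E -> R) (z : E) (x : E) : R := inf (stepS q z x).

Lemma step_glb q z x : subl q -> is_glb (stepS q z x) (step q z x).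
Proof.
  intro Hq. apply inf_spec.
  - exists (q x). exists 0. split; [lra|]. rewrite rs0, bs_add0. ring.
  - exists (- q (bs_opp x)). intros v [t [Ht ->]].
    pose proof (proj1 Hq (bs_add x (rs E t z)) (bs_opp x)).
    assert (Ee : bs_add (bs_add x (rs E t z)) (bs_opp x) = rs E t z).
    { rewrite (bs_addC _ x), <- bs_addA, bs_addN, bs_add0. auto. }
    rewrite Ee, (proj2 Hq) in H by auto. lra.
Qed.

Lemma step_le q z x : subl q -> step q z x <= q x.
Proof.
  intro Hq. apply (proj1 (step_glb q z x Hq)). exists 0. split; [lra|].
  rewrite rs0, bs_add0. ring.
Qed.

Lemma step_opp q z : subl q -> step q z (bs_opp z) <= - q z.
Proof.
  intro Hq. apply (proj1 (step_glb q z (bs_opp z) Hq)). exists 1. split; [lra|].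
  rewrite rs1, bs_addC, bs_addN, subl_zero by auto. ring.
Qed.

Lemma step_subl q z : subl q -> subl (step q z).
Proof.
  intro Hq. split.
  - intros x y. apply le_eps. intros eps He.
    destruct (glb_approx _ _ (step_glb q z x Hq) (eps/2)) as [v1 [[s [Hs ->]] Hv1]]; [lra|].
    destruct (glb_approx _ _ (step_glb q z y Hq) (eps/2)) as [v2 [[t [Ht ->]] Hv2]]; [lra|].
    assert (step q z (bs_add x y) <= q (bs_add (bs_add x y) (rs E (s + t) z)) - (s + t) * q z).
    { apply (proj1 (step_glb q z _ Hq)). exists (s + t); split; [lra|auto]. }
    assert (bs_add (bs_add x y) (rs E (s + t) z) = bs_add (bs_add x (rs E s z)) (bs_add y (rs E t z))).
    { rewrite rs_add. rewrite !bs_addA. f_equal. rewrite <- !bs_addA. f_equal. apply bs_addC. }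
    rewrite H0 in H. pose proof (proj1 Hq (bs_add x (rs E s z)) (bs_add y (rs E t z))). lra.
  - intros l x Hl. destruct (Req_dec l 0) as [->|Hl0].
    + rewrite rs0, Rmult_0_l. apply Rle_antisym.
      * rewrite <- (subl_zero q Hq). replace (q bs_zero) with (q bs_zero - 0 * q z) by ring.
        apply (proj1 (step_glb q z _ Hq)). exists 0. split; [lra|]. rewrite rs0, bs_add0; ring.
      * apply (proj2 (step_glb q z _ Hq)). intros v [t [Ht ->]].
        rewrite add0l, (proj2 Hq) by auto. lra.
    + assert (Hlp : 0 < l) by lra.
      assert (Hx : forall t, rs E l (bs_add x (rs E t z)) = bs_add (rs E l x) (rs E (l * t) z)).
      { intro t. rewrite rs_addr, rs_mul. auto. }
      apply Rle_antisym.
      *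
        assert (step q z (rs E l x) / l <= step q z x).
        { apply (proj2 (step_glb q z _ Hq)). intros v [t [Ht ->]].
          assert (step q z (rs E l x) <= q (bs_add (rs E l x) (rs E (l*t) z)) - (l*t) * q z).
          { apply (proj1 (step_glb q z _ Hq)). exists (l*t). split; [nra|auto]. }
          rewrite <- Hx, (proj2 Hq) in H by lra.
          apply (Rmult_le_reg_r l); [lra|]. unfold Rdiv. rewrite Rmult_assoc, Rinv_l by lra. nra. }
        unfold Rdiv in H. apply (Rmult_le_compat_l l) in H; [|lra].
        rewrite <- Rmult_assoc, (Rmult_comm l), Rmult_assoc, Rinv_r, Rmult_1_r in H by lra. exact H.
      * apply (proj2 (step_glb q z _ Hq)). intros v [t [Ht ->]].
        assert (step q z x <= q (bs_add x (rs E (t / l) z)) - (t / l) * q z).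
        { apply (proj1 (step_glb q z _ Hq)). exists (t / l). split; [|auto].
          unfold Rdiv; apply Rmult_le_pos; [lra|]. left; apply Rinv_0_lt_compat; lra. }
        assert (E1 : l * (t / l) = t) by (field; lra).
        pose proof (Hx (t / l)). rewrite E1 in H0. rewrite <- H0, (proj2 Hq) by lra.
        apply (Rmult_le_compat_l l) in H; [|lra].
        replace (l * (q (bs_add x (rs E (t / l) z)) - t / l * q z))
          with (l * q (bs_add x (rs E (t / l) z)) - (l * (t / l)) * q z) in H by ring.
        rewrite E1 in H. exact H.
Qed.

End Sub.

Section Lin.
Variable E : BanachSpace.
Variable q0 : E -> R.
Hypothesis Hq0 : subl E q0.

Definition PT := { q : E -> R | subl E q /\ forall x, q x <= q0 x }.
Definition ord (s t : PT) := forall x, proj1_sig t x <= proj1_sig s x.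

Definition chinf (A : PT -> Prop) (x : E) : R :=
  inf (fun v => exists s, A s /\ v = proj1_sig s x).

Lemma chinf_glb A x : (exists s, A s) ->
  is_glb (fun v => exists s, A s /\ v = proj1_sig s x) (chinf A x).
Proof.
  intros [s0 Hs0]. apply inf_spec.
  - exists (proj1_sig s0 x); eauto.
  - exists (- q0 (bs_opp x)). intros v [s [Hs ->]].
    destruct s as [q [Hq Hle]]; simpl.
    pose proof (subl_lb E q x Hq). pose proof (Hle (bs_opp x)). lra.
Qed.

Lemma chinf_subl A : (forall s t, A s -> A t -> ord s t \/ ord t s) ->
  (exists s, A s) -> subl E (chinf A).
Proof.
  intros Htot Hne. split.
  - intros x y. apply le_eps. intros eps He.
    destruct (glb_approx _ _ (chinf_glb A x Hne) (eps/2)) as [v1 [[s1 [Hs1 ->]] Hv1]]; [lra|].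
    destruct (glb_approx _ _ (chinf_glb A y Hne) (eps/2)) as [v2 [[s2 [Hs2 ->]] Hv2]]; [lra|].
    assert (Hb : forall s, A s -> chinf A (bs_add x y) <= proj1_sig s (bs_add x y)).
    { intros s Hs. apply (proj1 (chinf_glb A _ Hne)). eauto. }
    destruct (Htot s1 s2 Hs1 Hs2) as [H|H].
    +
      pose proof (Hb s2 Hs2). pose proof (proj1 (proj2_sig s2)) as Hq.
      pose proof (proj1 Hq x y). pose proof (H x). lra.
    + pose proof (Hb s1 Hs1). pose proof (proj1 (proj2_sig s1)) as Hq.
      pose proof (proj1 Hq x y). pose proof (H y). lra.
  - intros l x Hl. destruct (Req_dec l 0) as [->|Hl0].
    + rewrite Rmult_0_l. destruct (chinf_glb A (rs E 0 x) Hne) as [H1 H2].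
      destruct Hne as [s0 Hs0].
      assert (Hz : forall s : PT, proj1_sig s (rs E 0 x) = 0).
      { intros s. pose proof (proj1 (proj2_sig s)) as Hq. rewrite (proj2 Hq) by lra. ring. }
      apply Rle_antisym.
      * specialize (H1 _ (ex_intro _ s0 (conj Hs0 eq_refl))). rewrite Hz in H1. exact H1.
      * apply H2. intros v [s [_ ->]]. rewrite Hz; lra.
    + assert (Hlp : 0 < l) by lra.
      assert (Hz : forall s : PT, proj1_sig s (rs E l x) = l * proj1_sig s x).
      { intros s. pose proof (proj1 (proj2_sig s)) as Hq. rewrite (proj2 Hq) by lra. ring. }
      destruct (chinf_glb A (rs E l x) Hne) as [H1 H2].
      destruct (chinf_glb A x Hne) as [H3 H4].
      apply Rle_antisym.
      * assert (chinf A (rs E l x) / l <= chinf A x).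
        { apply H4. intros v [s [Hs ->]].
          pose proof (H1 _ (ex_intro _ s (conj Hs eq_refl))). rewrite Hz in H.
          apply (Rmult_le_reg_r l); [lra|]. unfold Rdiv. rewrite Rmult_assoc, Rinv_l by lra. nra. }
        unfold Rdiv in H. apply (Rmult_le_compat_l l) in H; [|lra].
        rewrite <- Rmult_assoc, (Rmult_comm l), Rmult_assoc, Rinv_r, Rmult_1_r in H by lra. exact H.
      * apply H2. intros v [s [Hs ->]]. rewrite Hz.
        apply Rmult_le_compat_l; [lra|]. apply H3; eauto.
Qed.

Lemma exists_min : exists t : PT, forall s, ord t s -> ord s t.
Proof.
  assert (t0 : PT).
  { exists q0. split; auto. intros; lra. }
  apply (zorn_pre PT t0 ord).
  - intros t x; lra.
  - intros r s t H1 H2 x. pose proof (H1 x); pose proof (H2 x); lra.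
  - intros A Htot. destruct (classic (exists s, A s)) as [Hne|Hne].
    + assert (Hp : subl E (chinf A) /\ forall x, chinf A x <= q0 x).
      { split. apply chinf_subl; auto.
        intros x. destruct Hne as [s Hs].
        pose proof (proj1 (chinf_glb A x (ex_intro _ s Hs)) _ (ex_intro _ s (conj Hs eq_refl))).
        pose proof (proj2 (proj2_sig s) x). simpl in *. lra. }
      exists (exist _ (chinf A) Hp). intros s Hs x; simpl.
      apply (proj1 (chinf_glb A x Hne)). eauto.
    + exists t0. intros s Hs. exfalso; eauto.
Qed.

Lemma exists_linear : exists f : E -> R,
  (forall x y, f (bs_add x y) = f x + f y) /\
  (forall t x, f (rs E t x) = t * f x) /\
  (forall x, f x <= q0 x).
Proof.
  destruct exists_min as [[q [Hq Hle]] Hmin].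
  assert (Hopp : forall z, q (bs_opp z) = - q z).
  { intro z.
    assert (Hs : subl E (step E q z) /\ forall x, step E q z x <= q0 x).
    { split. apply step_subl; auto. intro x. pose proof (step_le E q z x Hq). pose proof (Hle x). lra. }
    specialize (Hmin (exist _ _ Hs)).
    assert (ord (exist _ q (conj Hq Hle)) (exist _ _ Hs)).
    { intro x; simpl. apply step_le; auto. }
    specialize (Hmin H (bs_opp z)). simpl in Hmin.
    pose proof (step_opp E q z Hq). pose proof (subl_lb E q z Hq). lra. }
  exists q. split; [|split].
  - intros x y. apply Rle_antisym; [apply (proj1 Hq)|].
    pose proof (proj1 Hq (bs_add x y) (bs_opp y)).
    rewrite <- bs_addA, bs_addN, bs_add0, Hopp in H. lra.
  - intros t x. destruct (Rle_dec 0 t).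
    + apply (proj2 Hq); auto.
    + assert (rs E t x = bs_opp (rs E (- t) x)).
      { rewrite opp_rs, rs_mul. f_equal. ring. }
      rewrite H, Hopp, (proj2 Hq) by lra. ring.
  - auto.
Qed.
End Lin.

Section HB.
Variable E : BanachSpace.

Lemma norm_subl : subl E bs_norm.
Proof.
  split. apply bs_normD. intros t x Ht. rewrite norm_rs, Rabs_pos_eq; auto.
Qed.

Definition iE (x : E) : E := bs_scal (mkCx 0 1) x.

Lemma scal_decomp (c : Cx) (x : E) :
  bs_scal c x = bs_add (rs E (Re c) x) (rs E (Im c) (iE x)).
Proof.
  unfold rs, iE. rewrite <- bs_scalA, <- bs_scalDl. f_equal.
  destruct c; apply Cx_eq; simpl; ring.
Qed.

Lemma iEiE (x : E) : iE (iE x) = bs_opp x.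
Proof.
  unfold iE. rewrite <- bs_scalA, opp_rs. unfold rs. f_equal. apply Cx_eq; simpl; ring.
Qed.

Lemma iE_rs t (x : E) : iE (rs E t x) = rs E t (iE x).
Proof.
  unfold iE, rs. rewrite <- !bs_scalA. f_equal. apply Cx_eq; simpl; ring.
Qed.

Lemma iE_add (x y : E) : iE (bs_add x y) = bs_add (iE x) (iE y).
Proof. unfold iE; apply bs_scalDr. Qed.

Lemma norm_iE (x : E) : bs_norm (iE x) = bs_norm x.
Proof.
  unfold iE. rewrite bs_normZ. unfold Cabs; simpl.
  replace (0 * 0 + 1 * 1) with 1 by ring. rewrite sqrt_1. ring.
Qed.

Lemma sqrt_bound (u v : R) : sqrt (u * u + v * v) <= Rabs u + Rabs v.
Proof.
  rewrite <- (sqrt_Rsqr (Rabs u + Rabs v)) by (pose proof (Rabs_pos u); pose proof (Rabs_pos v); lra).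
  apply sqrt_le_1_alt. unfold Rsqr.
  pose proof (Rabs_pos u); pose proof (Rabs_pos v).
  pose proof (Rsqr_abs u); pose proof (Rsqr_abs v). unfold Rsqr in *. nra.
Qed.

Theorem hahn_banach (y : E) : y <> bs_zero -> exists phi : E -> Cx,
  (forall x x', phi (bs_add x x') = Cadd (phi x) (phi x')) /\
  (forall c x, phi (bs_scal c x) = Cmul c (phi x)) /\
  (forall x, Cabs (phi x) <= 2 * bs_norm x) /\
  phi y <> C0.
Proof.
  intro Hy.
  destruct (exists_linear E (step E bs_norm y) (step_subl E bs_norm y norm_subl))
    as [f [Hadd [Hhom Hle]]].
  assert (Hfb : forall x, Rabs (f x) <= bs_norm x).
  { intro x. pose proof (Hle x). pose proof (step_le E bs_norm y x norm_subl).
    pose proof (Hle (bs_opp x)). pose proof (step_le E bs_norm y (bs_opp x) norm_subl).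
    rewrite norm_opp in H2. assert (H3 : f (bs_opp x) <= bs_norm x) by lra.
    rewrite opp_rs, Hhom in H3.
    apply Rabs_le; lra. }
  assert (Hfy : bs_norm y <= f y).
  { pose proof (Hle (bs_opp y)). pose proof (step_opp E bs_norm y norm_subl).
    assert (H1 : f (bs_opp y) <= - bs_norm y) by lra.
    rewrite opp_rs, Hhom in H1. lra. }
  exists (fun x => mkCx (f x) (- f (iE x))). split; [|split; [|split]].
  - intros x x'. apply Cx_eq; simpl. apply Hadd. rewrite iE_add, Hadd; ring.
  - intros c x. rewrite scal_decomp. apply Cx_eq; simpl.
    + rewrite Hadd, !Hhom. ring.
    + rewrite iE_add, iE_rs, iE_rs, iEiE, Hadd, !Hhom, opp_rs, Hhom. ring.
  - intro x. unfold Cabs; simpl. eapply Rle_trans; [apply sqrt_bound|].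
    pose proof (Hfb x). pose proof (Hfb (iE x)). rewrite norm_iE in H0.
    rewrite Rabs_Ropp. lra.
  - intro H. assert (f y = 0) by (change (Re (mkCx (f y) (- f (iE y))) = 0); rewrite H; reflexivity).
    pose proof (norm_ge0 E y). assert (bs_norm y = 0) by lra.
    apply Hy, bs_norm_eq0; auto.
Qed.
End HB.

Section Main.
Variable A : BanachAlgebra.
Variable X : RightBanachModule A.
Variable phi : X -> Cx.
Hypothesis Hpa : forall x x', phi (bs_add x x') = Cadd (phi x) (phi x').
Hypothesis Hph : forall c x, phi (bs_scal c x) = Cmul c (phi x).
Hypothesis Hpb : forall x, Cabs (phi x) <= 2 * bs_norm x.

Lemma act_opp (x : X) (b : A) : rm_act (bs_opp x) b = bs_opp (rm_act x b).
Proof. rewrite !opp_rs. unfold rs. apply rm_act_scall. Qed.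

Lemma act_sub (x y : X) (b : A) : rm_act (bs_sub x y) b = bs_sub (rm_act x b) (rm_act y b).
Proof. unfold bs_sub. rewrite rm_actDl, act_opp. auto. Qed.

Lemma phi_sub (u v : X) : Cadd (phi u) (Copp (phi v)) = phi (bs_sub u v).
Proof.
  unfold bs_sub. rewrite Hpa. f_equal. rewrite opp_rs. unfold rs. rewrite Hph.
  apply Cx_eq; simpl; ring.
Qed.

Lemma Cadd_opp0 z : Cadd z (Copp C0) = z.
Proof. apply Cx_eq; simpl; ring. Qed.

Definition SJ (J : A -> X) : A -> A -> Cx := fun a b => phi (rm_act (J a) b).

Lemma SJ_bl (J : A -> X) : bounded_linear J -> bounded_linear_dual (SJ J).
Proof.
  intros [Ja [Jh [M0 HM0]]]. unfold SJ. split; [|split; [|split]].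
  - intro a. split; [|split].
    + intros x y. rewrite rm_actDr; auto.
    + intros c x. rewrite rm_act_scalr; auto.
    + exists (2 * bs_norm (J a)). intro x. eapply Rle_trans; [apply Hpb|].
      pose proof (rm_normM _ _ (J a) x). lra.
  - intros a a' b. rewrite Ja, rm_actDl; auto.
  - intros c a b. rewrite Jh, rm_act_scall; auto.
  - exists (2 * M0). intros a b. rewrite Cadd_opp0. eapply Rle_trans; [apply Hpb|].
    pose proof (rm_normM _ _ (J a) b). pose proof (HM0 a). pose proof (norm_ge0 _ b).
    assert (bs_norm (J a) * bs_norm b <= M0 * bs_norm a * bs_norm b) by (apply Rmult_le_compat_r; auto).
    lra.
Qed.

Lemma SJ_jmul (n : nat) (J : A -> X) : JMul_l X n J -> JMul_l_dual A n (SJ J).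
Proof.
  intros [Hb Hid]. split. apply SJ_bl; auto.
  intros a b. unfold SJ. rewrite Hid, rm_actA. auto.
Qed.

Lemma ST_ref (n : nat) (T : A -> X) : approx_local_JMul_l X n T -> ref_JMul_l_dual A n (SJ T).
Proof.
  intros [HT Hloc]. split. apply SJ_bl; auto.
  intros x eps He. destruct (Hloc x) as [J [HJ Hc]].
  destruct (Hc (eps / 4)) as [N HN]; [lra|].
  exists (SJ (J N)). split. apply SJ_jmul; auto.
  intro b. unfold SJ. rewrite phi_sub, <- act_sub.
  eapply Rle_trans; [apply Hpb|].
  pose proof (rm_normM _ _ (bs_sub (T x) (J N x)) b).
  specialize (HN N (le_n N)). rewrite norm_sub_sym in HN.
  pose proof (norm_ge0 _ b).
  assert (bs_norm (bs_sub (T x) (J N x)) * bs_norm b <= (eps/4) * bs_norm b)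
    by (apply Rmult_le_compat_r; lra).
  assert (2 * ((eps/4) * bs_norm b) <= eps * bs_norm b) by nra.
  lra.
Qed.
End Main.

Theorem mainTheorem18 :
  forall (A : BanachAlgebra) (n : nat), (2 <= n)%nat ->
  JMul_l_dual_alg_reflexive A n ->
  forall (X : RightBanachModule A),
  (forall x : X, (forall a : A, rm_act x a = bs_zero) -> x = bs_zero) ->
  forall T : A -> X, approx_local_JMul_l X n T -> JMul_l X n T.
Proof.
  intros A n Hn Hrefl X Hsep T HT. split; [exact (proj1 HT)|]. intro a.
  set (y := bs_sub (T (apow a n)) (rm_act (T (apow a (n - 1))) a)).
  assert (Hy : y = bs_zero).
  { apply Hsep. intro b. apply NNPP; intro Hz.
    destruct (hahn_banach X _ Hz) as [phi [Hpa [Hph [Hpb Hpz]]]].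
    pose proof (Hrefl _ (ST_ref A X phi Hpa Hph Hpb n T HT)) as HS.
    pose proof (proj2 HS a b) as E. unfold SJ in E.
    apply Hpz. unfold y. rewrite act_sub, rm_actA, <- phi_sub by auto.
    rewrite E. apply Cx_eq; simpl; ring. }
  unfold y, bs_sub in Hy.
  apply opp_uniq in Hy. rewrite <- (oppK _ (T (apow a n))), <- Hy, oppK. reflexivity.
Qed.
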